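(* Let $T$ be a tree and $\mathcal{M}$ a $2$-matching of $T^\ell$. Then \[ d(\mathcal{M},X)=x_{\ell(\mathcal{M})}+\text{(terms of lower total degree)}, \] where $x_{\ell(\mathcal{M})}=\prod_{uu\in\ell(\mathcal{M})}x_u$.
   Context: A tree is a simple connected graph without cycles. $L(T,X)$ is the matrix indexed by $V(T)$ with diagonal entries $x_u$ and off-diagonal entry $-1$ for adjacent vertices and $0$ otherwise. A $2$-matching of a graph (loops allowed) is a set $\mathcal{M}$ of edges such that every vertex is incident to at most two edges of $\mathcal{M}$ (a loop counts twice for incidence but as one edge). $T^\ell$ is $T$ with a loop added at each vertex; $\ell(\mathcal{M})$ is the set of loops in $\mathcal{M}$. Components of $\mathcal{M}$ are single loops or paths of $T$; orient each path $w_1\cdots w_{m+1}$ (either direction), with heads $\{w_2,\dots,w_{m+1}\}$ and tails $\{w_1,\dots,w_m\}$, a loop $uu$ having head and tail $u$; $h(\mathcal{M})$, $t(\mathcal{M})$ are the unions of heads, resp. tails, over all components. $d(\mathcal{M},X)=\pm\det L(T,X)[h(\mathcal{M}),t(\mathcal{M})]$ (rows $h(\mathcal{M})$, columns $t(\mathcal{M})$), the sign chosen so that the leading coefficient is positive. *)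

(* Defs.v *)
From mathcomp Require Import all_boot all_algebra.
From mathcomp Require Import mpoly.
Set Implicit Arguments. Unset Strict Implicit. Unset Printing Implicit Defensive.
Import GRing.Theory.
Local Open Scope ring_scope.

Definition is_tree (V : finType) (e : rel V) : Prop :=
  [/\ ssrbool.symmetric e, irreflexive e,
      (forall u v, connect e u v) &
      (forall c : seq V, (3 <= size c)%N -> ~ ucycle e c)].

(* Edges of T^l are represented as sets of vertices: a loop uu is [set u],
   a tree edge uv is [set u; v]. *)
Definition edge_of_Tl (V : finType) (e : rel V) (f : {set V}) : bool :=
  [exists u, f == [set u]] || [exists u, exists v, e u v && (f == [set u; v])].

(* Number of incidences of u in M (a loop counts twice). *)
Definition mdegree (V : finType) (M : {set {set V}}) (u : V) : nat :=
  (#|[set f in M | u \in f]| + ([set u] \in M))%N.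

Definition two_matching (V : finType) (e : rel V) (M : {set {set V}}) : Prop :=
  (forall f, f \in M -> edge_of_Tl e f) /\ (forall u, (mdegree M u <= 2)%N).

Definition loops (V : finType) (M : {set {set V}}) : {set V} :=
  [set u | [set u] \in M].

(* An orientation of the path components of M: a directed relation a
   orienting every non-loop edge of M in exactly one direction, such that
   every vertex has at most one outgoing and at most one incoming arc,
   i.e. every path w_1 ... w_{m+1} is oriented as a directed path
   (in one of its two directions). *)
Definition path_orientation (V : finType) (M : {set {set V}}) (a : rel V) : Prop :=
  [/\ (forall u v, a u v -> (u != v) && ([set u; v] \in M)),
      (forall u v, u != v -> [set u; v] \in M -> a u v (+) a v u),
      (forall u v w, a u v -> a u w -> v = w) &
      (forall u v w, a v u -> a w u -> v = w)].

(* heads: w_2 .. w_{m+1} of every oriented path, plus loop vertices *)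
Definition heads (V : finType) (M : {set {set V}}) (a : rel V) : {set V} :=
  [set v | ([set v] \in M) || [exists u, a u v]].
(* tails: w_1 .. w_m of every oriented path, plus loop vertices *)
Definition tails (V : finType) (M : {set {set V}}) (a : rel V) : {set V} :=
  [set u | ([set u] \in M) || [exists v, a u v]].

Definition xvar (V : finType) (u : V) : {mpoly int[#|V|]} := 'X_(enum_rank u).

Definition Lent (V : finType) (e : rel V) (u v : V) : {mpoly int[#|V|]} :=
  if u == v then xvar u else if e u v then -1 else 0.

(* det L(T,X)[H, K]: rows indexed by H, columns by K, both listed in the
   enumeration order of V (only meaningful when #|H| = #|K|, which holds
   for H = h(M), K = t(M); the overall sign is irrelevant below). *)
Definition subdet (V : finType) (e : rel V) (H K : {set V}) : {mpoly int[#|V|]} :=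
  \det (\matrix_(i < #|H|, j < #|H|)
          Lent e (enum_val i) (nth (enum_val i) (enum K) j)).

Definition xloops (V : finType) (M : {set {set V}}) : {mpoly int[#|V|]} :=
  \prod_(u in loops M) xvar u.

(* Main.v *)
Require Import Defs.
From mathcomp Require Import all_boot all_algebra all_fingroup.
From mathcomp Require Import mpoly.
From mathcomp Require Import zify.
Set Implicit Arguments. Unset Strict Implicit. Unset Printing Implicit Defensive.
Import GRing.Theory.
Local Open Scope ring_scope.

Lemma msize_xvar (V : finType) (u : V) : msize (xvar u) = 2%N.
Proof. by rewrite /xvar msizeX mdeg1. Qed.

Lemma xvar_neq0 (V : finType) (u : V) : xvar u != 0.
Proof. by rewrite -msize_poly_eq0 msize_xvar. Qed.

Lemma msize_prod_seq k (I : eqType) (P : pred I) (G : I -> {mpoly int[k]}) (s : seq I) :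
  (forall i, G i != 0) -> (forall i, (msize (G i) <= (P i).+1)%N) ->
  \prod_(i <- s) G i != 0 /\ (msize (\prod_(i <- s) G i) <= (count P s).+1)%N.
Proof.
move=> nz hs; elim: s => [|x s [IHnz IHs]]; first by rewrite big_nil oner_eq0 msize1.
rewrite big_cons /=; split; first by rewrite mulf_neq0.
rewrite msizeM //; have := hs x; move: IHs.
case: (msize (G x)) (msize_poly_eq0 (G x)) => [|m]; first by rewrite (negbTE (nz x)).
move=> _ h1 h2; rewrite addSn /=.
apply: leq_trans (leq_add (leqnn m) h1) _; move: h2; case: (P x) => /=; lia.
Qed.

Lemma msize_prod k (I : finType) (P : pred I) (G : I -> {mpoly int[k]}) :
  (forall i, G i != 0) -> (forall i, (msize (G i) <= (P i).+1)%N) ->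
  (msize (\prod_i G i) <= #|P|.+1)%N.
Proof.
move=> nz hs; have [_ h] := msize_prod_seq (enum I) nz hs.
move: h; rewrite big_enum /= cardE /enum_mem size_filter -enumT.
rewrite (@eq_filter _ _ predT) // filter_predT.
by apply: leq_trans; apply: eq_leq; congr (msize _ ); apply: eq_bigl.
Qed.

Section Tree.
Variables (V : finType) (e : rel V) (M : {set {set V}}) (a : rel V).
Hypotheses (esy : ssrbool.symmetric e) (eirr : irreflexive e)
  (acyc : forall c : seq V, (3 <= size c)%N -> ~ ucycle e c)
  (tm : two_matching e M) (po : path_orientation M a).

Local Notation L := (loops M).
Local Notation H := (heads M a).
Local Notation K := (tails M a).

Lemma pair_eq (x y u v : V) : [set x; y] = [set u; v] ->
  (x = u /\ y = v) \/ (x = v /\ y = u).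
Proof.
move=> E.
have hx : x \in [set u; v] by rewrite -E set21.
have hy : y \in [set u; v] by rewrite -E set22.
have hu : u \in [set x; y] by rewrite E set21.
have hv : v \in [set x; y] by rewrite E set22.
move: hx hy hu hv; rewrite !inE.
by move=> /orP[]/eqP ? /orP[]/eqP ? /orP[]/eqP ? /orP[]/eqP ?; subst; auto.
Qed.

Lemma inL x : (x \in L) = ([set x] \in M).
Proof. by rewrite inE. Qed.

Lemma loop_only x f : x \in L -> f \in M -> x \in f -> f = [set x].
Proof.
rewrite inL => xM fM xf; apply/eqP; apply: contraT => ne.
have := (tm.2 x); rewrite /mdegree xM /=.
have sub : [set [set x]; f] \subset [set g in M | x \in g].
  by apply/subsetP=> g; rewrite !inE => /orP[]/eqP->; rewrite ?xM ?set11 ?fM ?xf.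
have := subset_leq_card sub; rewrite cards2 eq_sym ne /=.
move=> h1 h2; move: (leq_trans (leq_add h1 (leqnn 1)) h2); by [].
Qed.

Lemma arcP u v : a u v -> u != v /\ [set u; v] \in M.
Proof. by case: po => h _ _ _ /h /andP[]. Qed.

Lemma arc_edge u v : a u v -> e u v.
Proof.
move=> /arcP [ne inM]; case/orP: (tm.1 _ inM).
  case/existsP=> w /eqP E.
  have : u \in [set w] by rewrite -E set21.
  have : v \in [set w] by rewrite -E set22.
  by rewrite !inE => /eqP hv /eqP hu; rewrite hu hv eqxx in ne.
case/existsP=> w /existsP [w' /andP [ew /eqP E]].
by case: (pair_eq E) => [[-> ->]|[-> ->]] //; rewrite esy.
Qed.

Lemma arc_notL u v : a u v -> u \notin L /\ v \notin L.
Proof.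
move=> h; have [ne inM] := arcP h; split; apply/negP => uL.
  have := loop_only uL inM (set21 u v) => E.
  have : v \in [set u] by rewrite -E set22.
  by rewrite inE eq_sym (negbTE ne).
have := loop_only uL inM (set22 u v) => E.
have : u \in [set v] by rewrite -E set21.
by rewrite inE (negbTE ne).
Qed.

Lemma arc_xor u v : a u v -> ~~ a v u.
Proof.
move=> h; have [ne inM] := arcP h; case: po => _ hx _ _.
by move: (hx u v ne inM); rewrite h.
Qed.

Lemma arc_fun u v w : a u v -> a u w -> v = w.
Proof. by case: po => _ _ hf _; apply: hf. Qed.

Lemma arc_inj u v w : a v u -> a w u -> v = w.
Proof. by case: po => _ _ _ hf; apply: hf. Qed.

Lemma LH : L \subset H.
Proof. by apply/subsetP => x; rewrite inL !inE => ->. Qed.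
Lemma LK : L \subset K.
Proof. by apply/subsetP => x; rewrite inL !inE => ->. Qed.

Definition tau (h : V) : V := if h \in L then h else odflt h [pick u | a u h].
Definition taui (k : V) : V := if k \in L then k else odflt k [pick v | a k v].

Lemma tauL h : h \in L -> tau h = h.
Proof. by rewrite /tau => ->. Qed.
Lemma tauiL h : h \in L -> taui h = h.
Proof. by rewrite /taui => ->. Qed.

Lemma tau_arc h : h \in H -> h \notin L -> a (tau h) h.
Proof.
rewrite /tau inE -inL => /orP[-> //|/existsP [u hu]] /negbTE ->.
by case: pickP => [w //|/(_ u)]; rewrite hu.
Qed.

Lemma taui_arc k : k \in K -> k \notin L -> a k (taui k).
Proof.
rewrite /taui inE -inL => /orP[-> //|/existsP [u hu]] /negbTE ->.
by case: pickP => [w //|/(_ u)]; rewrite hu.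
Qed.

Lemma tauK h : h \in H -> tau h \in K.
Proof.
move=> hH; case: (boolP (h \in L)) => hL; first by rewrite tauL // (subsetP LK).
by rewrite inE; apply/orP; right; apply/existsP; exists h; apply: tau_arc.
Qed.

Lemma tauiH k : k \in K -> taui k \in H.
Proof.
move=> kK; case: (boolP (k \in L)) => kL; first by rewrite tauiL // (subsetP LH).
by rewrite inE; apply/orP; right; apply/existsP; exists k; apply: taui_arc.
Qed.

Lemma tauiK h : h \in H -> taui (tau h) = h.
Proof.
move=> hH; case: (boolP (h \in L)) => hL; first by rewrite !tauL // tauiL.
have ar := tau_arc hH hL; have [nL _] := arc_notL ar.
by have := taui_arc (tauK hH) nL => /(arc_fun ar) <-.
Qed.

Lemma tauKi k : k \in K -> tau (taui k) = k.
Proof.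
move=> kK; case: (boolP (k \in L)) => kL; first by rewrite !tauiL // tauL.
have ar := taui_arc kK kL; have [_ nL] := arc_notL ar.
by have := tau_arc (tauiH kK) nL => /(arc_inj ar) <-.
Qed.

Lemma cardHK : #|H| = #|K|.
Proof.
have -> : K = [set tau x | x in H].
  apply/setP => k; apply/idP/imsetP => [kK|[h hH ->]]; last exact: tauK.
  by exists (taui k); rewrite ?tauKi ?tauiH.
by rewrite card_in_imset // => x y xH yH E; rewrite -(tauiK xH) E tauiK.
Qed.


Definition erm (u v : V) : rel V :=
  [rel x y | e x y && ~~ (((x == u) && (y == v)) || ((x == v) && (y == u)))].

Lemma no_bypass u v : e u v -> u != v -> ~~ connect (erm u v) v u.
Proof.
move=> euv ne; apply/negP; case/connectP => p pth.
case/shortenP: pth => p' pth' uq _ lst.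
apply: (acyc (c := v :: p')).
  case: p' pth' lst {uq} => [|y [|z q]] //=.
    by move=> _ E; rewrite E eqxx in ne.
  move=> /andP[h _] E; move: h; rewrite -E /erm /= !eqxx /=.
  by rewrite orbT andbF.
apply/andP; split => //.
rewrite /= rcons_path -lst euv andbT.
by apply: sub_path pth' => x y /andP [].
Qed.

Lemma core (I : finType) (p : {perm I}) (r g : I -> V) :
  injective r -> (forall i, g i \in K) -> (forall i, r (p i) = taui (g i)) ->
  (forall i, r i = g i \/ e (r i) (g i)) -> forall i, p i != i -> g i \in L.
Proof.
move=> rinj gK rp adj i pi; apply: contraT => uNL.
set u := g i; have auv := taui_arc (gK i) uNL.
set v := taui u in auv; have vE : r (p i) = v by rewrite rp.
have [ne _] := arcP auv; have euv := arc_edge auv.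
have nb := no_bypass euv ne.
suff uS : connect (erm u v) v u by rewrite uS in nb.
apply: contraT => uNS.
have fixi k : p (iter k p i) != iter k p i.
  apply: contra pi => /eqP E; apply/eqP.
  have : iter k p (p i) = iter k p i by rewrite -iterSr iterS.
  rewrite -!permX; exact: perm_inj.
have step j : p j != j -> connect (erm u v) v (r j) -> connect (erm u v) v (r (p j)).
  move=> pj cj.
  have cy : connect (erm u v) v (g j).
    have [E|ej] := adj j; first by rewrite -E.
    apply: (connect_trans cj); apply: connect1.
    rewrite /erm /= ej /=; apply/negP => /orP[]/andP[]/eqP rju.
      by move: cj; rewrite rju (negbTE uNS).
    move=> /eqP gju; move: pj; rewrite -(inj_eq rinj) rp gju -/v rju eqxx.
    by [].
  rewrite rp; case: (boolP (g j \in L)) => gL; first by rewrite tauiL.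
  have ag := taui_arc (gK j) gL.
  apply: (connect_trans cy); apply: connect1; rewrite /erm /= arc_edge //=.
  apply/negP => /orP[]/andP[]/eqP E1 /eqP E2.
    by move: cy; rewrite E1 (negbTE uNS).
  by move: ag; rewrite E2 E1 => /arc_xor; rewrite auv.
have all k : connect (erm u v) v (r (iter k.+1 p i)).
  elim: k => [|k IH]; first by rewrite /= vE connect0.
  by rewrite iterS; apply: step => //; apply: fixi.
have ci : connect (erm u v) v (r i).
  have := all (#[p]%g).-1; rewrite prednK ?order_gt0 // -permX expg_order perm1.
  by [].
case: (adj i) => [E|ei]; first by move: ci; rewrite E (negbTE uNS).
have : connect (erm u v) v u.
  apply: (connect_trans ci); apply: connect1; rewrite /erm /= ei /=.
  apply/negP => /orP[]/andP[]/eqP E _.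
    by move: ci; rewrite E (negbTE uNS).
  by move: pi; rewrite -(inj_eq rinj) vE E eqxx.
by rewrite (negbTE uNS).
Qed.


Definition r (i : 'I_#|H|) : V := enum_val i.
Definition c (j : 'I_#|H|) : V := enum_val (A := K) (cast_ord cardHK j).

Lemma r_inj : injective r.
Proof. exact: enum_val_inj. Qed.
Lemma rH i : r i \in H.
Proof. exact: enum_valP. Qed.
Lemma cK j : c j \in K.
Proof. exact: enum_valP. Qed.
Lemma c_inj : injective c.
Proof. by move=> j1 j2 /enum_val_inj /(congr1 (cast_ord (esym cardHK))); rewrite !cast_ordK. Qed.
Lemma c_surj k : k \in K -> exists j, c j = k.
Proof.
move=> kK; exists (cast_ord (esym cardHK) (enum_rank_in kK k)).
by rewrite /c cast_ordKV enum_rankK_in.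
Qed.
Lemma r_surj h : h \in H -> exists i, r i = h.
Proof. by move=> hH; exists (enum_rank_in hH h); rewrite /r enum_rankK_in. Qed.

Definition s0f (i : 'I_#|H|) : 'I_#|H| := odflt i [pick j | c j == tau (r i)].
Lemma cs0 i : c (s0f i) = tau (r i).
Proof.
rewrite /s0f; case: pickP => [j /eqP //|none].
have [j hj] := c_surj (tauK (rH i)); by move: (none j); rewrite hj eqxx.
Qed.
Lemma s0_inj : injective s0f.
Proof.
move=> i1 i2 E; apply: r_inj.
by rewrite -(tauiK (rH i1)) -(tauiK (rH i2)) -!cs0 E.
Qed.
Definition sigma0 : {perm 'I_#|H|} := perm s0_inj.

Definition Amx : 'M[{mpoly int[#|V|]}]_#|H| :=
  \matrix_(i, j) Lent e (enum_val i) (nth (enum_val i) (enum K) j).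

Lemma AmxE i j : Amx i j = Lent e (r i) (c j).
Proof.
rewrite mxE /c /r /enum_val; congr Lent; apply: set_nth_default.
by rewrite -cardE -cardHK ltn_ord.
Qed.

Lemma fixP (s : {perm 'I_#|H|}) :
  (forall i, Amx i (s i) != 0) ->
  [/\ forall i, c (s i) = taui (c (s i)) \/ True,
      forall i, r ((s * sigma0^-1)%g i) = taui (c (s i)) &
      forall i, (s * sigma0^-1)%g i != i -> c (s i) \in L].
Proof.
move=> nz; set p := (s * sigma0^-1)%g.
have rp i : r (p i) = taui (c (s i)).
  rewrite /p permM; set k := (sigma0^-1)%g (s i).
  have -> : c (s i) = tau (r k) by rewrite -cs0 -(permE s0_inj) permKV.
  by rewrite tauiK ?rH.
split => //; first by move=> i; right.
apply: (core (r := r) (g := fun i => c (s i))) => //.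
- exact: r_inj.
- by move=> i; apply: cK.
- move=> i; move: (nz i); rewrite AmxE /Lent.
  case: (r i =P c (s i)) => [E _|_]; first by left.
  by case: ifP => [he _|_]; [right|rewrite eqxx].
Qed.


Definition FL : {set 'I_#|H|} := [set i | r i \in L].

Lemma L_img : L = [set r i | i in FL].
Proof.
apply/setP => u; apply/idP/imsetP => [uL|[i]]; last by rewrite inE => ? ->.
have [i ri] := r_surj (subsetP LH _ uL); exists i => //.
by rewrite inE ri.
Qed.

Lemma card_FL : #|FL| = #|L|.
Proof. by rewrite L_img card_imset //; apply: r_inj. Qed.

Lemma term_bound (s : {perm 'I_#|H|}) : s != sigma0 ->
  (msize (\prod_i Amx i (s i)) <= #|L|)%N.
Proof.
move=> ne.
case: (pickP (fun i => Amx i (s i) == 0)) => [i0 /eqP z|nz].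
  by rewrite (bigD1 i0) //= z mul0r msize0.
have nz' i : Amx i (s i) != 0 by rewrite nz.
have [_ rp core'] := fixP nz'.
set p := (s * sigma0^-1)%g in rp core'.
set P := [pred i | r i == c (s i)].
have fx i : P i -> p i = i.
  rewrite inE => /eqP E; apply/eqP; apply: contraT => pi.
  have := core' i pi; rewrite -E => rL.
  by move: pi; rewrite -(inj_eq r_inj) rp -E tauiL // eqxx.
have PL : P \subset FL.
  apply/subsetP => i Pi; have := fx i Pi; move: Pi; rewrite inE => /eqP E pi.
  rewrite inE; apply: contraT => nL.
  have h2 : taui (c (s i)) = r i by rewrite -rp pi.
  have := taui_arc (cK (s i)); rewrite h2 -E => /(_ nL) /arcP [].
  by rewrite eqxx.
have [i0 pi0] : exists i0, p i0 != i0.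
  case: (pickP (fun i => p i != i)) => [i0 h|none]; first by exists i0.
  move: ne; suff -> : s = sigma0 by rewrite eqxx.
  apply/permP => i; move: (none i) => /negbFE /eqP.
  by rewrite /p permM => E; rewrite -[in RHS]E permKV.
have prop : P \proper FL.
  apply/properP; split => //; exists (p i0).
    by rewrite inE rp tauiL // core'.
  apply/negP => /fx E; move: pi0.
  by rewrite -(inj_eq (@perm_inj _ p)) E eqxx.
have lt := proper_card prop; rewrite card_FL in lt.
apply: leq_trans lt; apply: msize_prod => // i.
rewrite AmxE /Lent; case: ifP => h.
  by rewrite msize_xvar; move: h; rewrite inE => ->.
by case: ifP; rewrite ?msizeN ?msize1 ?msize0.
Qed.


Lemma main_term : \prod_i Amx i (sigma0 i) =
  xloops M * (-1) ^+ #|[pred i | r i \notin L]|.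
Proof.
have E i : Amx i (sigma0 i) = if r i \in L then xvar (r i) else -1.
  rewrite AmxE permE cs0 /Lent; case: (boolP (r i \in L)) => hL.
    by rewrite tauL // eqxx.
  have ar := tau_arc (rH i) hL; have [ne _] := arcP ar.
  by rewrite eq_sym (negbTE ne) esy (arc_edge ar).
rewrite (eq_bigr _ (fun i _ => E i)) (bigID (fun i => r i \in L)) /=.
congr (_ * _).
  have -> : xloops M = \prod_(i in FL) xvar (r i).
    by rewrite /xloops L_img big_imset // => ? ? _ _ /r_inj.
  apply: eq_big => i; first by rewrite [RHS]inE.
  by move=> ->.
rewrite -prodr_const; apply: eq_big => i; first by [].
by move=> /negbTE ->.
Qed.

Lemma main_sec : exists s : int, (s = 1 \/ s = -1) /\
    (msize (subdet e H K - s *: xloops M) <= #|L|)%N.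
Proof.
set m := #|[pred i | r i \notin L]|.
exists ((-1) ^+ sigma0 * (-1) ^+ m); split.
  by rewrite -exprD -signr_odd; case: (odd _); [right|left].
have -> : subdet e H K = \det Amx by [].
rewrite /determinant (bigD1 sigma0) //=.
have E0 : (-1) ^+ sigma0 * \prod_i Amx i (sigma0 i) =
   ((-1) ^+ sigma0 * (-1) ^+ m : int) *: xloops M.
  rewrite main_term -mul_mpolyC rmorphM /= !rmorph_sign.
  by rewrite -mulrA [xloops M * _]mulrC.
rewrite -E0 addrAC subrr add0r.
apply: leq_trans (msize_sum _ _ _) _.
apply/bigmax_leqP => t ht.
by rewrite mulr_sign; case: ifP; rewrite ?msizeN => _; exact: (term_bound ht).
Qed.

End Tree.

Theorem lemma3p2 (V : finType) (e : rel V) (M : {set {set V}}) (a : rel V) :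
  is_tree e -> two_matching e M -> path_orientation M a ->
  exists s : int, (s = 1 \/ s = -1) /\
    (msize (subdet e (heads M a) (tails M a) - s *: xloops M) <= #|loops M|)%N.
Proof.
case=> esy eirr _ acyc tm po.
exact: (main_sec esy acyc tm po).
Qed.
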